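(* Let $p+q=4k$ with $k\ge1$. (i) If $p,q$ are even, $p\ge2$ and $q\ge6$, then $\mathbb{O}_{p,q}\simeq\mathbb{O}_{p+4,q-4}$. (ii) If $p,q$ are odd, $p\ge1$ and $q\ge3$, then $\mathbb{O}_{p,q}\simeq\mathbb{O}_{p+2,q-2}$. (The isomorphisms preserve the $\mathbb{Z}_2^n$-graded structure.)
   Context: $\mathbb{Z}_2=\{0,1\}$. For $p+q=n\ge3$, $\mathbb{O}_{p,q}$ is the real algebra with basis $\{u_x: x\in\mathbb{Z}_2^n\}$ and product $u_x\cdot u_y=(-1)^{f(x,y)}u_{x+y}$, where $f(x,y)=\sum_{1\le i<j<k\le n}(x_ix_jy_k+x_iy_jx_k+y_ix_jx_k)+\sum_{1\le i\le j\le n}x_iy_j+\sum_{1\le i\le p}x_iy_i$. Homogeneous elements are scalar multiples of some $u_x$. *)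

(* Defs.v *)
From HB Require Import structures.
From mathcomp Require Import all_boot all_order all_algebra.
From mathcomp Require Import reals.
Set Implicit Arguments. Unset Strict Implicit. Unset Printing Implicit Defensive.
Import Order.TTheory GRing.Theory Num.Theory.
Local Open Scope ring_scope.

(* The grading group Z_2^n, as boolean vectors indexed by 'I_n
   (coordinate i of the paper corresponds to the ordinal i-1). *)
Notation grade n := {ffun 'I_n -> bool}.

Definition gadd (n : nat) (x y : grade n) : grade n := [ffun i => x i (+) y i].

(* The cubic function f of the paper (value in nat; only its parity matters):
   f(x,y) = sum_{i<j<k} (x_i x_j y_k + x_i y_j x_k + y_i x_j x_k)
          + sum_{i<=j} x_i y_j + sum_{i<=p} x_i y_i. *)
Definition fcub (n p : nat) (x y : grade n) : nat :=
  (\sum_(i < n) \sum_(j < n) \sum_(k < n)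
      nat_of_bool ((i < j) && (j < k)) *
      (nat_of_bool [&& x i, x j & y k] + nat_of_bool [&& x i, y j & x k]
       + nat_of_bool [&& y i, x j & x k]))
  + (\sum_(i < n) \sum_(j < n) nat_of_bool ((i <= j) && (x i && y j)))
  + (\sum_(i < n) nat_of_bool ((i < p) && (x i && y i)))%N.

(* Elements of the real algebra O_{p,q} (n = p + q): real coordinates on the
   basis (u_x)_{x in Z_2^n}. *)
Notation elt R n := {ffun grade n -> (R : realType)^o}.

Definition ubasis (R : realType) (n : nat) (x : grade n) : elt R n :=
  [ffun z => (z == x)%:R].

Definition omul (R : realType) (n p : nat) (a b : elt R n) : elt R n :=
  \sum_(x : grade n) \sum_(y : grade n)
     (((-1) ^+ fcub p x y) * a x * b y) *: ubasis R (gadd x y).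

Definition homogeneous (R : realType) (n : nat) (a : elt R n) : Prop :=
  exists (x : grade n) (c : R), a = c *: ubasis R x.

Definition graded_iso (R : realType) (n p1 p2 : nat) : Prop :=
  exists phi : elt R n -> elt R n,
    [/\ (forall (c : R) (u v : elt R n), phi (c *: u + v) = c *: phi u + phi v),
        bijective phi,
        (forall a b : elt R n, phi (omul p1 a b) = omul p2 (phi a) (phi b)) &
        (forall a : elt R n, homogeneous a -> homogeneous (phi a))].

(* Main.v *)
Require Import Defs.
From HB Require Import structures.
From mathcomp Require Import all_boot all_order all_algebra.
From mathcomp Require Import reals.
From mathcomp Require Import ring zify.
Set Implicit Arguments. Unset Strict Implicit. Unset Printing Implicit Defensive.
Import Order.TTheory GRing.Theory Num.Theory.

Section Xor.
Variable n : nat.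
Implicit Types (x y z : 'I_n -> bool) (M : 'I_n -> 'I_n -> bool).

Lemma odd_sumX (I : finType) (F : I -> nat) :
  odd (\sum_i F i) = \big[addb/false]_i odd (F i).
Proof. by apply: (big_morph odd) => //; exact: oddD. Qed.

Lemma odd_b (b : bool) : odd b = b. Proof. by case: b. Qed.

Lemma xor_andl (I : finType) (b : bool) (F : I -> bool) :
  (b && \big[addb/false]_i F i) = \big[addb/false]_i (b && F i).
Proof. exact: big_distrr. Qed.

Lemma xor_split (I : finType) (F G : I -> bool) :
  \big[addb/false]_i (F i (+) G i) = (\big[addb/false]_i F i) (+) \big[addb/false]_i G i.
Proof. exact: big_split. Qed.

Lemma xor_pred1 (I : finType) (j : I) (F : I -> bool) :
  \big[addb/false]_i ((i == j) && F i) = F j.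
Proof.
rewrite -(big_pred1_eq addb j F) big_mkcond; apply: eq_bigr => i _.
by case: (i == j).
Qed.

Definition bil M x y := \big[addb/false]_i \big[addb/false]_j [&& M i j, x i & y j].
Definition Wt x := \big[addb/false]_i x i.
Definition In x y := \big[addb/false]_i (x i && y i).

Lemma bilDl M x x' y :
  bil M (fun i => x i (+) x' i) y = bil M x y (+) bil M x' y.
Proof.
rewrite /bil -xor_split; apply: eq_bigr => i _; rewrite -xor_split.
by apply: eq_bigr => j _; case: (M i j); case: (x i); case: (x' i); case: (y j).
Qed.

Lemma bilDr M x y y' :
  bil M x (fun i => y i (+) y' i) = bil M x y (+) bil M x y'.
Proof.
rewrite /bil -xor_split; apply: eq_bigr => i _; rewrite -xor_split.
by apply: eq_bigr => j _; case: (M i j); case: (x i); case: (y' j); case: (y j).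
Qed.

Lemma bilZl M (l : bool) x y : bil M (fun i => l && x i) y = l && bil M x y.
Proof.
rewrite /bil xor_andl; apply: eq_bigr => i _; rewrite xor_andl.
by apply: eq_bigr => j _; case: l; case: (M i j).
Qed.

Lemma bilZr M (l : bool) x y : bil M x (fun i => l && y i) = l && bil M x y.
Proof.
rewrite /bil xor_andl; apply: eq_bigr => i _; rewrite xor_andl.
by apply: eq_bigr => j _; case: l; case: (M i j); case (x i).
Qed.

Lemma bil_ext M M' x x' y y' : M =2 M' -> x =1 x' -> y =1 y' ->
  bil M x y = bil M' x' y'.
Proof.
move=> HM Hx Hy; apply: eq_bigr => i _; apply: eq_bigr => j _.
by rewrite HM Hx Hy.
Qed.

Lemma bil_tr M x y (l m : bool) v w :
  bil M (fun i => x i (+) (l && v i)) (fun i => y i (+) (m && w i)) =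
  bil M x y (+) (l && bil M v y) (+) (m && bil M x w) (+) (l && m && bil M v w).
Proof.
rewrite bilDl !bilDr !bilZl !bilZr.
by case: l; case: m; case: (bil M x y); case: (bil M v y); case: (bil M x w);
   case: (bil M v w).
Qed.

Lemma bil_eq M x y : bil (fun i j => (i == j) && M i j) x y = \big[addb/false]_i [&& M i i, x i & y i].
Proof.
rewrite /bil; apply: eq_bigr => i _.
rewrite (eq_bigr (fun j => (j == i) && [&& M i j, x i & y j])); last first.
  by move=> j _; rewrite (eq_sym i j); case: (j == i).
exact: xor_pred1.
Qed.

Lemma bil_all x y : bil (fun _ _ => true) x y = Wt x && Wt y.
Proof.
rewrite /bil /Wt big_distrl /=; apply: eq_bigr => i _; rewrite xor_andl.
by apply: eq_bigr.
Qed.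

Lemma bil_lt_sym x y :
  bil (fun i j => i < j)%N x y (+) bil (fun i j => i < j)%N y x = (Wt x && Wt y) (+) In x y.
Proof.
have -> : bil (fun i j => i < j)%N y x = bil (fun i j => j < i)%N x y.
  by rewrite /bil exchange_big; apply: eq_bigr => i _; apply: eq_bigr => j _;
     case: (j < i)%N; case: (x i); case (y j).
have -> : In x y = bil (fun i j => (i == j) && true) x y.
  by rewrite bil_eq.
rewrite -bil_all /bil -!xor_split.
apply: eq_bigr => i _; rewrite -?xor_split; apply: eq_bigr => j _ /=.
case: (ltngtP i j) => [h|h|/val_inj ->]; rewrite ?eqxx ?ltnn /=.
- have -> : (i == j) = false by apply/eqP => E; move: h; rewrite E ltnn.
  by case: (x i); case: (y j).
- have -> : (i == j) = false by apply/eqP => E; move: h; rewrite E ltnn.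
  by case: (x i); case: (y j).
- by case: (x j); case: (y j).
Qed.

End Xor.

Lemma tri_nat (i j m : nat) : (i < j)%N ->
  (j < m)%N (+) ((i < m) && (m < j))%N (+) (m < i)%N = ~~ ((i == m) (+) (j == m)).
Proof.
move=> hij.
case: (ltngtP i m) => him; case: (ltngtP j m) => hjm //=; try lia.
Qed.

Section Cub.
Variable n : nat.
Implicit Types (x y : 'I_n -> bool).

Definition E2 x := bil (fun i j : 'I_n => i < j)%N x x.

Lemma xch3 (F : 'I_n -> 'I_n -> 'I_n -> bool) :
  \big[addb/false]_i \big[addb/false]_j \big[addb/false]_k F i j k =
  \big[addb/false]_k \big[addb/false]_i \big[addb/false]_j F i j k.
Proof.
rewrite (eq_bigr (fun i => \big[addb/false]_k \big[addb/false]_j F i j k)).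
  exact: exchange_big.
by move=> i _; rewrite exchange_big.
Qed.


Lemma eq_big3 (F G : 'I_n -> 'I_n -> 'I_n -> bool) :
  (forall i j k, F i j k = G i j k) ->
  \big[addb/false]_i \big[addb/false]_j \big[addb/false]_k F i j k =
  \big[addb/false]_i \big[addb/false]_j \big[addb/false]_k G i j k.
Proof.
by move=> H; apply: eq_bigr => i _; apply: eq_bigr => j _; apply: eq_bigr => k _.
Qed.

Lemma xsplit3 (F G H : 'I_n -> 'I_n -> 'I_n -> bool) :
  \big[addb/false]_i \big[addb/false]_j \big[addb/false]_k (F i j k (+) G i j k (+) H i j k) =
  (\big[addb/false]_i \big[addb/false]_j \big[addb/false]_k F i j k) (+)
  (\big[addb/false]_i \big[addb/false]_j \big[addb/false]_k G i j k) (+)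
  (\big[addb/false]_i \big[addb/false]_j \big[addb/false]_k H i j k).
Proof.
rewrite -!xor_split; apply: eq_bigr => i _; rewrite -!xor_split.
by apply: eq_bigr => j _; rewrite -!xor_split.
Qed.

Lemma cub_step1 x y :
  \big[addb/false]_(i < n) \big[addb/false]_(j < n) \big[addb/false]_(k < n)
    (((i < j) && (j < k))%N && ([&& x i, x j & y k] (+) [&& x i, y j & x k] (+) [&& y i, x j & x k]))
  = \big[addb/false]_(m < n) (y m && \big[addb/false]_(i < n) \big[addb/false]_(j < n)
      [&& (i < j)%N, x i, x j & ((j < m)%N (+) ((i < m) && (m < j))%N (+) (m < i)%N)]).
Proof.
have H1 : forall m, (y m && \big[addb/false]_(i < n) \big[addb/false]_(j < n)
      [&& (i < j)%N, x i, x j & ((j < m)%N (+) ((i < m) && (m < j))%N (+) (m < i)%N)]) =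
   \big[addb/false]_(i < n) \big[addb/false]_(j < n)
     ([&& y m, (i < j)%N, x i, x j & (j < m)%N] (+)
      [&& y m, (i < j)%N, x i, x j & ((i < m) && (m < j))%N] (+)
      [&& y m, (i < j)%N, x i, x j & (m < i)%N]).
  move=> m; rewrite xor_andl; apply: eq_bigr => i _; rewrite xor_andl.
  apply: eq_bigr => j _.
  by case: (y m); case: (i < j)%N; case: (x i); case: (x j); case: (j < m)%N;
     case: ((i < m) && (m < j))%N; case: (m < i)%N.
rewrite [RHS](eq_bigr _ (fun m _ => H1 m)).
rewrite xsplit3.
have H2 : forall i j k : 'I_n, ((i < j) && (j < k))%N && ([&& x i, x j & y k] (+) [&& x i, y j & x k] (+) [&& y i, x j & x k]) =
   (((i < j) && (j < k))%N && [&& x i, x j & y k]) (+)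
   (((i < j) && (j < k))%N && [&& x i, y j & x k]) (+)
   (((i < j) && (j < k))%N && [&& y i, x j & x k]).
  by move=> i j k; case: ((i < j) && (j < k))%N.
rewrite (eq_big3 H2).
rewrite xsplit3; congr (_ (+) _ (+) _).
- rewrite xch3; apply: eq_bigr => m _; apply: eq_bigr => i _; apply: eq_bigr => j _.
  by case: (y m); case: (i < j)%N; case: (x i); case: (x j); case: (j < m)%N.
- rewrite exchange_big /=; apply: eq_bigr => m _; apply: eq_bigr => i _; apply: eq_bigr => j _.
  case: (boolP (i < m)%N) => him; case: (boolP (m < j)%N) => hmj /=;
    rewrite ?andbF ?andbT //.
  rewrite (ltn_trans him hmj).
  by case: (y m); case: (x i); case: (x j).
- apply: eq_bigr => m _; apply: eq_bigr => i _; apply: eq_bigr => j _.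
  by case: (y m); case: (i < j)%N; case: (x i); case: (x j); case: (m < i)%N.
Qed.


Lemma eq_big2 (F G : 'I_n -> 'I_n -> bool) :
  (forall i j, F i j = G i j) ->
  \big[addb/false]_i \big[addb/false]_j F i j =
  \big[addb/false]_i \big[addb/false]_j G i j.
Proof. by move=> H; apply: eq_bigr => i _; apply: eq_bigr => j _. Qed.

Lemma xsplit2 (F G : 'I_n -> 'I_n -> bool) :
  \big[addb/false]_i \big[addb/false]_j (F i j (+) G i j) =
  (\big[addb/false]_i \big[addb/false]_j F i j) (+)
  (\big[addb/false]_i \big[addb/false]_j G i j).
Proof. by rewrite -!xor_split; apply: eq_bigr => i _; rewrite -!xor_split. Qed.

Lemma ord_ltF (i j : 'I_n) : (i < j)%N -> (i == j) = false.
Proof. by move=> h; apply/eqP => E; move: h; rewrite E ltnn. Qed.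
Lemma ord_gtF (i j : 'I_n) : (j < i)%N -> (i == j) = false.
Proof. by move=> h; apply/eqP => E; move: h; rewrite E ltnn. Qed.

Lemma Wt_split x (m : 'I_n) :
  Wt x = (\big[addb/false]_(j < n) ((j < m)%N && x j)) (+) x m
         (+) (\big[addb/false]_(j < n) ((m < j)%N && x j)).
Proof.
rewrite /Wt -(xor_pred1 m x) -!xor_split; apply: eq_bigr => j _.
case: (ltngtP j m) => h.
- by rewrite (@ord_ltF j m h) /=; case: (x j).
- by rewrite (@ord_gtF j m h) /=.
- have -> : j = m by exact/val_inj.
  by rewrite eqxx /=; case: (x m).
Qed.

Lemma cub_step2 x (m : 'I_n) :
  \big[addb/false]_(i < n) \big[addb/false]_(j < n)
      [&& (i < j)%N, x i, x j & ((j < m)%N (+) ((i < m) && (m < j))%N (+) (m < i)%N)]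
  = E2 x (+) (x m && ~~ Wt x).
Proof.
have H : forall i j : 'I_n,
  [&& (i < j)%N, x i, x j & ((j < m)%N (+) ((i < m) && (m < j))%N (+) (m < i)%N)] =
  [&& (i < j)%N, x i & x j] (+) (((i == m) && [&& (i < j)%N, x i & x j]) (+)
                                  ((j == m) && [&& (i < j)%N, x i & x j])).
  move=> i j; case: (boolP (i < j)%N) => hij /=; last by rewrite !andbF.
  rewrite (tri_nat m hij).
  have e1 : (nat_of_ord i == nat_of_ord m) = (i == m) by [].
  have e2 : (nat_of_ord j == nat_of_ord m) = (j == m) by [].
  by rewrite e1 e2; case: (x i); case (x j); case: (i == m); case: (j == m).
rewrite (eq_big2 H) xsplit2 xsplit2 (Wt_split x m).
congr (_ (+) _).
rewrite (eq_bigr (fun i => (i == m) && \big[addb/false]_(j < n) [&& (i < j)%N, x i & x j]));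
  last by move=> i _; rewrite xor_andl.
rewrite xor_pred1 [X in _ (+) X = _]exchange_big /=.
rewrite [X in _ (+) X = _](eq_bigr (fun j => (j == m) && \big[addb/false]_(i < n) [&& (i < j)%N, x i & x j]));
  last by move=> j _; rewrite xor_andl.
rewrite xor_pred1.
rewrite (eq_bigr (fun j : 'I_n => x m && ((m < j)%N && x j))); last first.
  by move=> j _; case: (x m); case: (m < j)%N.
rewrite [X in _ (+) X](eq_bigr (fun i : 'I_n => x m && ((i < m)%N && x i))); last first.
  by move=> i _; case: (x m); case: (i < m)%N; case: (x i).
rewrite -!xor_andl.
by case: (x m); case: (\big[addb/false]_(j < n) ((j < m)%N && x j));
   case: (\big[addb/false]_(j < n) ((m < j)%N && x j)).
Qed.

Lemma cub_odd x y :
  \big[addb/false]_(i < n) \big[addb/false]_(j < n) \big[addb/false]_(k < n)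
    (((i < j) && (j < k))%N && ([&& x i, x j & y k] (+) [&& x i, y j & x k] (+) [&& y i, x j & x k]))
  = (Wt y && E2 x) (+) (~~ Wt x && In x y).
Proof.
rewrite cub_step1 (eq_bigr (fun m => y m && (E2 x (+) (x m && ~~ Wt x)))); last first.
  by move=> m _; rewrite cub_step2.
rewrite (eq_bigr (fun m => (y m && E2 x) (+) (~~ Wt x && (x m && y m)))); last first.
  by move=> m _; case: (y m); case: (x m); case: (E2 x); case: (Wt x).
rewrite xor_split /Wt /In -xor_andl; congr (_ (+) _).
by rewrite big_distrl.
Qed.

End Cub.

Definition fcubP (n : nat) (P : pred 'I_n) (x y : grade n) : nat :=
  (\sum_(i < n) \sum_(j < n) \sum_(k < n)
      nat_of_bool ((i < j) && (j < k)) *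
      (nat_of_bool [&& x i, x j & y k] + nat_of_bool [&& x i, y j & x k]
       + nat_of_bool [&& y i, x j & x k]))
  + (\sum_(i < n) \sum_(j < n) nat_of_bool ((i <= j) && (x i && y j)))
  + (\sum_(i < n) nat_of_bool (P i && (x i && y i)))%N.

Lemma fcubE n p (x y : grade n) : fcub p x y = fcubP (fun i : 'I_n => (i < p)%N) x y.
Proof. by []. Qed.

Definition Bl n (x y : 'I_n -> bool) := bil (fun i j : 'I_n => i <= j)%N x y.
Definition Dp n (P : pred 'I_n) (x y : 'I_n -> bool) :=
  \big[addb/false]_i [&& P i, x i & y i].

Lemma fcubP_odd n (P : pred 'I_n) (x y : grade n) :
  odd (fcubP P x y) =
  (Wt y && E2 x) (+) (~~ Wt x && In x y) (+) Bl x y (+) Dp P x y.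
Proof.
rewrite /fcubP !oddD -cub_odd !odd_sumX; congr (_ (+) _ (+) _).
- apply: eq_bigr => i _; rewrite odd_sumX; apply: eq_bigr => j _.
  rewrite odd_sumX; apply: eq_bigr => k _.
  by rewrite oddM !oddD !odd_b.
- rewrite /Bl /bil; apply: eq_bigr => i _; rewrite odd_sumX; apply: eq_bigr => j _.
  by rewrite odd_b.
- by apply: eq_bigr => i _; rewrite odd_b.
Qed.

Definition allb (p : bool -> bool) := p true && p false.
Lemma allbP (p : bool -> bool) : allb p -> forall b, p b.
Proof. by case/andP => ? ? []. Qed.

Lemma taut15 (F G : bool -> bool -> bool -> bool -> bool -> bool -> bool -> bool -> bool -> bool -> bool -> bool -> bool -> bool -> bool -> bool) :
  allb (fun b0 => allb (fun b1 => allb (fun b2 => allb (fun b3 => allb (fun b4 => allb (fun b5 => allb (fun b6 => allb (fun b7 => allb (fun b8 => allb (fun b9 => allb (fun b10 => allb (fun b11 => allb (fun b12 => allb (fun b13 => allb (fun b14 => F b0 b1 b2 b3 b4 b5 b6 b7 b8 b9 b10 b11 b12 b13 b14 == G b0 b1 b2 b3 b4 b5 b6 b7 b8 b9 b10 b11 b12 b13 b14))))))))))))))) ->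
  forall b0 b1 b2 b3 b4 b5 b6 b7 b8 b9 b10 b11 b12 b13 b14, F b0 b1 b2 b3 b4 b5 b6 b7 b8 b9 b10 b11 b12 b13 b14 = G b0 b1 b2 b3 b4 b5 b6 b7 b8 b9 b10 b11 b12 b13 b14.
Proof.
move=> H b0 b1 b2 b3 b4 b5 b6 b7 b8 b9 b10 b11 b12 b13 b14.
apply/eqP; move: H.
move/allbP/(_ b0).
move/allbP/(_ b1).
move/allbP/(_ b2).
move/allbP/(_ b3).
move/allbP/(_ b4).
move/allbP/(_ b5).
move/allbP/(_ b6).
move/allbP/(_ b7).
move/allbP/(_ b8).
move/allbP/(_ b9).
move/allbP/(_ b10).
move/allbP/(_ b11).
move/allbP/(_ b12).
move/allbP/(_ b13).
move/allbP/(_ b14).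
by [].
Qed.

Section Iso.
Local Open Scope ring_scope.
Variable R : realType.
Variable n : nat.

Definition omulP (P : pred 'I_n) (a b : elt R n) : elt R n :=
  \sum_(x : grade n) \sum_(y : grade n)
     (((-1) ^+ fcubP P x y) * a x * b y) *: ubasis R (gadd x y).

Definition graded_isoP (P1 P2 : pred 'I_n) : Prop :=
  exists phi : elt R n -> elt R n,
    [/\ (forall (c : R) (u v : elt R n), phi (c *: u + v) = c *: phi u + phi v),
        bijective phi,
        (forall a b : elt R n, phi (omulP P1 a b) = omulP P2 (phi a) (phi b)) &
        (forall a : elt R n, homogeneous a -> homogeneous (phi a))].

Lemma graded_isoPE p1 p2 :
  graded_isoP (fun i : 'I_n => (i < p1)%N) (fun i : 'I_n => (i < p2)%N) ->
  graded_iso R n p1 p2.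
Proof. by []. Qed.

Lemma graded_isoP_trans P1 P2 P3 :
  graded_isoP P1 P2 -> graded_isoP P2 P3 -> graded_isoP P1 P3.
Proof.
move=> [f [fl fb fm fh]] [g [gl gb gm gh]].
exists (g \o f); split => /=.
- by move=> c u v; rewrite fl gl.
- exact: bij_comp.
- by move=> a b; rewrite fm gm.
- by move=> a /fh /gh.
Qed.

Lemma ffunDE (f g : elt R n) z : (f + g) z = f z + g z.
Proof. by rewrite /= ffunE. Qed.
Lemma ffunZE (c : R) (f : elt R n) z : (c *: f) z = c * f z.
Proof. by rewrite /= ffunE. Qed.
Lemma ubasisE (x z : grade n) : ubasis R x z = (z == x)%:R.
Proof. by rewrite ffunE. Qed.

Definition sg (b : bool) : R := (-1) ^+ b.
Lemma sgK b : sg b * sg b = 1.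
Proof. by rewrite /sg -signr_addb addbb. Qed.

Lemma iso_of (P1 P2 : pred 'I_n) (s : grade n -> grade n) (g : grade n -> bool) :
  involutive s -> (forall x y, s (gadd x y) = gadd (s x) (s y)) ->
  (forall x y, odd (fcubP P1 x y) (+) g (gadd x y) =
               odd (fcubP P2 (s x) (s y)) (+) g x (+) g y) ->
  graded_isoP P1 P2.
Proof.
move=> sK sD H.
pose phi (a : elt R n) : elt R n := [ffun z => sg (g (s z)) * a (s z)].
pose psi (a : elt R n) : elt R n := [ffun z => sg (g z) * a (s z)].
exists phi; split.
- move=> c u v; apply/ffunP => z.
  rewrite !(ffunDE, ffunZE, ffunE) /=.
  ring.
- exists psi.
  + move=> a; apply/ffunP => z; rewrite !ffunE sK mulrA sgK; exact: mul1r.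
  + move=> a; apply/ffunP => z; rewrite !ffunE sK mulrA sgK; exact: mul1r.
- have E (P : pred 'I_n) (a b : elt R n) w : omulP P a b w =
      \sum_(x : grade n) \sum_(y : grade n)
        ((-1) ^+ fcubP P x y * a x * b y) * (w == gadd x y)%:R.
    rewrite /omulP sum_ffunE; apply: eq_bigr => x _; rewrite sum_ffunE.
    by apply: eq_bigr => y _; rewrite ffunZE ubasisE.
  move=> a b; apply/ffunP => z.
  rewrite ffunE !E [RHS](reindex_inj (inv_inj sK)) /= mulr_sumr.
  apply: eq_bigr => x _; rewrite [RHS](reindex_inj (inv_inj sK)) /= mulr_sumr.
  apply: eq_bigr => y _.
  rewrite !ffunE !sK -sD -(inv_eq sK).
  case: eqP => [->|_]; last by rewrite !mulr0.
  have := H x y; move/(congr1 sg); rewrite /sg !signr_addb !signr_odd => E'.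
  rewrite !mulr1 !mulrA [_ * (-1) ^+ fcubP P1 x y]mulrC E'.
  by rewrite -[_ * _ * (-1) ^+ g y * a x]mulrA [(-1) ^+ g y * a x]mulrC !mulrA.
- move=> a [x [c ->]]; exists (s x), (sg (g x) * c); apply/ffunP => z.
  rewrite !(ffunZE, ffunE) /=.
  rewrite (inv_eq sK).
  case: eqP => [->|_]; last by rewrite !mulr0.
  by rewrite sK; ring.
Qed.

End Iso.

Section Tr.
Variable n : nat.
Variables (P1 P2 S A : 'I_n -> bool).
Implicit Types (x y : 'I_n -> bool).

Definition ell (T : 'I_n -> bool) x := \big[addb/false]_(i < n) (T i && x i).

Lemma ellD T x y : ell T (fun i => x i (+) y i) = ell T x (+) ell T y.
Proof. rewrite /ell -xor_split; apply: eq_bigr => i _; by case: (T i). Qed.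
Lemma ellZ T (l : bool) x : ell T (fun i => l && x i) = l && ell T x.
Proof. rewrite /ell xor_andl; apply: eq_bigr => i _; by case: l; case: (T i). Qed.
Lemma ell_ext T T' x x' : T =1 T' -> x =1 x' -> ell T x = ell T' x'.
Proof. by move=> h h'; apply: eq_bigr => i _; rewrite h h'. Qed.

Definition trv (x : grade n) : grade n := [ffun i => x i (+) (ell S x && A i)].

Lemma ell_trv T (x : grade n) :
  ell T (trv x) = ell T x (+) (ell S x && ell T A).
Proof.
rewrite (@ell_ext T T _ (fun i => x i (+) (ell S x && A i))) //; last by move=> i; rewrite ffunE.
by rewrite ellD ellZ.
Qed.

Lemma Wt_ell x : Wt x = ell (fun _ => true) x.
Proof. by []. Qed.

Lemma bil_trv M (x y : grade n) :
  bil M (trv x) (trv y) =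
  bil M x y (+) (ell S x && bil M A y) (+) (ell S y && bil M x A)
  (+) (ell S x && ell S y && bil M A A).
Proof.
rewrite -bil_tr; apply: bil_ext => // i; by rewrite ffunE.
Qed.

Lemma In_bil x y : In x y = bil (fun i j => (i == j) && true) x y.
Proof. by rewrite bil_eq. Qed.
Lemma Dp_bil (P : 'I_n -> bool) x y : Dp P x y = bil (fun i j => (i == j) && P i) x y.
Proof. by rewrite bil_eq. Qed.

Definition cvec (i : 'I_n) := \big[addb/false]_(j < n) (A j && (j <= i)%N).
Definition Lv i := (A i && ~~ P2 i) (+) cvec i.
Definition mask x := fun i => S i && x i.
Definition gfun (x : grade n) := (ell S x && ell Lv x) (+) E2 (mask x).

Lemma BlA_l y : Bl A y = ell cvec y.
Proof.
rewrite /Bl /bil exchange_big /=; apply: eq_bigr => j _.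
rewrite /cvec big_distrl /=; apply: eq_bigr => i _.
by case: (i <= j)%N; case: (A i); case: (y j).
Qed.

Lemma Wt_splitA (i : 'I_n) : Wt A =
  \big[addb/false]_(j < n) (((j <= i)%N && A j) (+) ((i <= j)%N && A j) (+) ((j == i) && A j)).
Proof.
apply: eq_bigr => j _; case: (ltngtP j i) => h.
- by rewrite (@ord_ltF n j i h) /=; case: (A j).
- by rewrite (@ord_gtF n j i h) /=; case: (A j).
- have -> : j = i by exact/val_inj.
  by rewrite eqxx; case: (A i).
Qed.

Lemma BlA_r x : Bl x A = ell cvec x (+) In x A (+) (Wt x && Wt A).
Proof.
have key : forall i : 'I_n, \big[addb/false]_(j < n) [&& (i <= j)%N, x i & A j] =
                     (cvec i && x i) (+) (x i && A i) (+) (x i && Wt A).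
  move=> i; rewrite (Wt_splitA i) !xor_split xor_pred1 /cvec.
  have -> : \big[addb/false]_(j < n) [&& (i <= j)%N, x i & A j] =
            x i && \big[addb/false]_(j < n) ((i <= j)%N && A j).
    by rewrite xor_andl; apply: eq_bigr => j _; case: (i <= j)%N; case: (x i).
  have -> : \big[addb/false]_(j < n) ((j <= i)%N && A j) =
            \big[addb/false]_(j < n) (A j && (j <= i)%N).
    by apply: eq_bigr => j _; rewrite andbC.
  by case: (x i); case: (\big[addb/false]_(j < n) ((i <= j)%N && A j));
     case: (\big[addb/false]_(j < n) (A j && (j <= i)%N)); case: (A i).
rewrite /Bl /bil (eq_bigr _ (fun i _ => key i)) !xor_split; congr (_ (+) _ (+) _).
by rewrite /Wt big_distrl.
Qed.

Lemma Lv_ell x : ell Lv x = In A x (+) Dp P2 A x (+) ell cvec x.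
Proof.
rewrite /ell /In /Dp -!xor_split; apply: eq_bigr => i _; rewrite /Lv.
by case: (A i); case: (P2 i); case: (cvec i); case: (x i).
Qed.

Lemma In_sym x y : In x y = In y x.
Proof. by apply: eq_bigr => i _; rewrite andbC. Qed.
Lemma Dp_sym (P : 'I_n -> bool) x y : Dp P x y = Dp P y x.
Proof. by apply: eq_bigr => i _; case: (P i); case: (x i); case: (y i). Qed.
Lemma InAA : In A A = Wt A.
Proof. by apply: eq_bigr => i _; rewrite andbb. Qed.

Lemma ell_gadd T (x y : grade n) : ell T (gadd x y) = ell T x (+) ell T y.
Proof.
rewrite -ellD; apply: ell_ext => // i; by rewrite ffunE.
Qed.

Lemma Wt_gadd (x y : grade n) : Wt (gadd x y) = Wt x (+) Wt y.
Proof. by rewrite !Wt_ell ell_gadd. Qed.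

Lemma E2_mask_gadd (x y : grade n) :
  E2 (mask (gadd x y)) = E2 (mask x) (+) E2 (mask y) (+) (ell S x && ell S y) (+) Dp S x y.
Proof.
rewrite /E2 (@bil_ext n (fun i j : 'I_n => (i < j)%N) (fun i j : 'I_n => (i < j)%N) _ (fun i => mask x i (+) mask y i) _ (fun i => mask x i (+) mask y i)) //;
  try by move=> i; rewrite /mask ffunE; case: (S i).
rewrite bilDl !bilDr.
have e : bil (fun i j : 'I_n => (i < j)%N) (mask y) (mask x) =
    bil (fun i j : 'I_n => (i < j)%N) (mask x) (mask y) (+) ((ell S x && ell S y) (+) Dp S x y).
  have := bil_lt_sym (mask x) (mask y).
  have -> : Wt (mask x) = ell S x by [].
  have -> : Wt (mask y) = ell S y by [].
  have -> : In (mask x) (mask y) = Dp S x y.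
    by apply: eq_bigr => i _; rewrite /mask; case: (S i).
  move=> <-; by case: (bil _ (mask x) (mask y)); case: (bil _ (mask y) (mask x)).
rewrite e.
by case: (bil _ (mask x) (mask x)); case: (bil _ (mask x) (mask y));
   case: (bil _ (mask y) (mask y));
   case: (ell S x); case: (ell S y); case: (Dp S x y). 
Qed.

Lemma E2_trv (x : grade n) :
  E2 (trv x) = E2 x (+) (ell S x && ((Wt A && Wt x) (+) In A x)) (+) (ell S x && E2 A).
Proof.
rewrite /E2 bil_trv -(bil_lt_sym A x).
by case: (ell S x); case: (bil _ x x); case: (bil _ A x); case: (bil _ x A); case: (bil _ A A).
Qed.

Lemma Wt_trv (x : grade n) : Wt (trv x) = Wt x (+) (ell S x && Wt A).
Proof. by rewrite !Wt_ell ell_trv. Qed.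

Lemma In_trv (x y : grade n) :
  In (trv x) (trv y) = In x y (+) (ell S x && In A y) (+) (ell S y && In A x)
    (+) (ell S x && ell S y && Wt A).
Proof. by rewrite !In_bil bil_trv -!In_bil (In_sym x A) InAA. Qed.

Lemma Bl_trv (x y : grade n) :
  Bl (trv x) (trv y) = Bl x y (+) (ell S x && ell cvec y)
    (+) (ell S y && (ell cvec x (+) In x A (+) (Wt x && Wt A)))
    (+) (ell S x && ell S y && Bl A A).
Proof. by rewrite /Bl bil_trv -/(Bl A y) -/(Bl x A) -/(Bl A A) BlA_l BlA_r. Qed.

Lemma Dp_trv (P : 'I_n -> bool) (x y : grade n) :
  Dp P (trv x) (trv y) = Dp P x y (+) (ell S x && Dp P A y) (+) (ell S y && Dp P A x)
    (+) (ell S x && ell S y && Dp P A A).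
Proof. by rewrite !Dp_bil bil_trv -!Dp_bil (Dp_sym P x A). Qed.

Hypothesis hSA : ell S A = false.

Lemma trvK : involutive trv.
Proof.
move=> x; apply/ffunP => i; rewrite ffunE ell_trv hSA andbF addbF ffunE.
by rewrite -addbA addbb addbF.
Qed.

Lemma trvD (x y : grade n) : trv (gadd x y) = gadd (trv x) (trv y).
Proof.
apply/ffunP => i; rewrite !ffunE ell_gadd.
by case: (x i); case: (y i); case: (ell S x); case: (ell S y); case: (A i).
Qed.

Hypothesis hP : forall i, P2 i = P1 i (+) S i.

Lemma Dp21 x y : Dp P2 x y = Dp P1 x y (+) Dp S x y.
Proof.
rewrite /Dp -xor_split; apply: eq_bigr => i _; rewrite hP.
by case: (P1 i); case: (S i); case: (x i); case: (y i).
Qed.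

Lemma main_pre (x y : grade n) :
  odd (fcubP P1 x y) (+) gfun (gadd x y) =
  odd (fcubP P2 (trv x) (trv y)) (+) gfun x (+) gfun y ->
  True.
Proof. by []. Qed.

Ltac pre_rw x y := rewrite !fcubP_odd /gfun E2_mask_gadd !ell_gadd !Wt_trv E2_trv In_trv Bl_trv Dp_trv !Lv_ell
  [Dp P2 x y]Dp21 ?(In_sym x A) ?(Dp_sym P2 x A).

Lemma main_id1 (x y : grade n) : (forall i, S i = A i) -> Wt A = false -> E2 A = true ->
  Bl A A = true -> Dp P2 A A = true ->
  odd (fcubP P1 x y) (+) gfun (gadd x y) =
  odd (fcubP P2 (trv x) (trv y)) (+) gfun x (+) gfun y.
Proof.
move=> hSA' hW hE hB hD.
have eS : forall z, ell S z = In A z by move=> z; apply: ell_ext.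
pre_rw x y; rewrite hW hE hB hD !eS.
move: (Wt x) (Wt y) (E2 x) (In x y) (Bl x y) (Dp P1 x y) (In A x) (In A y)
  (Dp P2 A x) (Dp P2 A y) (ell cvec x) (ell cvec y) (E2 (mask x)) (E2 (mask y)) (Dp S x y).
apply: taut15; by vm_compute.
Qed.

Lemma main_id2 (x y : grade n) : (forall i, A i = true) -> Wt A = false -> E2 A = false ->
  Bl A A = false -> Dp P2 A A = true ->
  odd (fcubP P1 x y) (+) gfun (gadd x y) =
  odd (fcubP P2 (trv x) (trv y)) (+) gfun x (+) gfun y.
Proof.
move=> hA hW hE hB hD.
have eA : forall z, In A z = Wt z by move=> z; apply: eq_bigr => i _; rewrite hA.
pre_rw x y; rewrite hW hE hB hD !eA.
move: (Wt x) (Wt y) (E2 x) (In x y) (Bl x y) (Dp P1 x y) (ell S x) (ell S y)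
  (Dp P2 A x) (Dp P2 A y) (ell cvec x) (ell cvec y) (E2 (mask x)) (E2 (mask y)) (Dp S x y).
apply: taut15; by vm_compute.
Qed.

End Tr.

Lemma tr_iso (R : realType) n (P1 P2 S A : 'I_n -> bool) :
  ell S A = false -> (forall i, P2 i = P1 i (+) S i) ->
  ((forall i, S i = A i) /\ Wt A = false /\ E2 A = true /\ Bl A A = true /\ Dp P2 A A = true) \/
  ((forall i, A i = true) /\ Wt A = false /\ E2 A = false /\ Bl A A = false /\ Dp P2 A A = true) ->
  graded_isoP R P1 P2.
Proof.
move=> hSA hP hc.
apply: (@iso_of R n P1 P2 (trv S A) (gfun P2 S A)).
- exact: trvK.
- exact: trvD.
- move=> x y; case: hc => [[h1 [h2 [h3 [h4 h5]]]]|[h1 [h2 [h3 [h4 h5]]]]].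
  + exact: main_id1.
  + exact: main_id2.
Qed.

Lemma fcubP_ext n (P Q : 'I_n -> bool) x y : P =1 Q -> fcubP P x y = fcubP Q x y.
Proof. by move=> e; rewrite /fcubP; congr (_ + _); apply: eq_bigr => i _; rewrite e. Qed.

Lemma graded_isoP_ext (R : realType) n (P1 P2 Q1 Q2 : 'I_n -> bool) :
  P1 =1 Q1 -> P2 =1 Q2 -> graded_isoP R P1 P2 -> graded_isoP R Q1 Q2.
Proof.
move=> e1 e2.
have eq (P Q : 'I_n -> bool) (a b : elt R n) : P =1 Q -> omulP P a b = omulP Q a b.
  move=> e; apply: eq_bigr => x _; apply: eq_bigr => y _; by rewrite (fcubP_ext x y e).
move=> [phi [h1 h2 h3 h4]]; exists phi; split => // a b.
by rewrite -(eq P1 Q1 a b e1) -(eq P2 Q2 _ _ e2).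
Qed.

Lemma Wt_odd n (v : 'I_n -> bool) : Wt v = odd (\sum_i v i).
Proof. by rewrite odd_sumX; apply: eq_bigr => i _; rewrite odd_b. Qed.

Lemma e2sum n (f : nat -> bool) :
  (\sum_(i < n) \sum_(j < n) ((i < j) && f i && f j))%N = 'C(\sum_(i < n) f i, 2).
Proof.
elim: n => [|n IH]; first by rewrite !big_ord0.
rewrite big_ord_recr /= [X in _ + X = _]big1 ?addn0; last first.
  by move=> j _; rewrite ltnNge -ltnS ltn_ord.
rewrite (eq_bigr (fun i : 'I_n => \sum_(j < n) ((i < j) && f i && f j) + (f i && f n))%N);
  last by move=> i _; rewrite big_ord_recr /= ltn_ord.
rewrite big_split /= IH big_ord_recr /=.
have [fn|fn] : f n = true \/ f n = false by case: (f n); [left|right].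
all: rewrite fn /=.
- rewrite addn1 binS bin1; congr (_ + _); apply: eq_bigr => i _; by rewrite andbT.
- by rewrite addn0 [X in _ + X = _]big1 ?addn0 // => i _; rewrite andbF.
Qed.

Lemma E2_nat n (f : nat -> bool) :
  E2 (fun i : 'I_n => f i) = odd 'C(\sum_(i < n) f i, 2).
Proof.
rewrite -e2sum odd_sumX; apply: eq_bigr => i _; rewrite odd_sumX; apply: eq_bigr => j _.
by rewrite odd_b andbA.
Qed.

Lemma bilDM n (M1 M2 : 'I_n -> 'I_n -> bool) x y :
  bil (fun i j => M1 i j (+) M2 i j) x y = bil M1 x y (+) bil M2 x y.
Proof.
rewrite /bil -xor_split; apply: eq_bigr => i _; rewrite -xor_split.
apply: eq_bigr => j _; by case: (M1 i j); case: (M2 i j); case: (x i); case: (y j).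
Qed.

Lemma Bl_diag n (v : 'I_n -> bool) : Bl v v = E2 v (+) Wt v.
Proof.
have -> : Wt v = In v v by apply: eq_bigr => i _; rewrite andbb.
rewrite In_bil /Bl /E2 -bilDM; apply: bil_ext => // i j.
rewrite leq_eqVlt andbT; have -> : (i == j) = (nat_of_ord i == j) by [].
by case: ltngtP.
Qed.

Lemma sum_int n l r : (\sum_(i < n) ((l <= i) && (i < r)))%N = minn r n - minn l n.
Proof.
elim: n => [|n IH]; first by rewrite big_ord0; lia.
rewrite big_ord_recr /= IH.
case: (boolP ((l <= n) && (n < r))) => /= h; lia.
Qed.

Lemma sum_eq n a : (\sum_(i < n) (nat_of_ord i == a))%N = (a < n).
Proof.
elim: n => [|n IH]; first by rewrite big_ord0.
rewrite big_ord_recr /= IH.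
case: (ltngtP a n) => h /=; try lia.
Qed.

Lemma Wt_int n l r : Wt (fun i : 'I_n => (l <= i) && (i < r)) = odd (minn r n - minn l n).
Proof. by rewrite Wt_odd sum_int. Qed.

Lemma E2_int n l r : E2 (fun i : 'I_n => (l <= i) && (i < r)) = odd 'C(minn r n - minn l n, 2).
Proof. by rewrite (E2_nat _ (fun k => (l <= k) && (k < r))) sum_int. Qed.

Lemma Wt_ext n (u v : 'I_n -> bool) : u =1 v -> Wt u = Wt v.
Proof. by move=> e; apply: eq_bigr => i _; rewrite e. Qed.

Lemma Dp_Wt n (P v : 'I_n -> bool) : Dp P v v = Wt (fun i => P i && v i).
Proof. by apply: eq_bigr => i _; rewrite andbb. Qed.

Lemma ell_Wt n (v : 'I_n -> bool) : ell v v = Wt v.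
Proof. by apply: eq_bigr => i _; rewrite andbb. Qed.

Theorem mainTheorem6 (R : realType) (k p q : nat) :
  (1 <= k)%N -> (p + q = 4 * k)%N ->
  ((~~ odd p -> ~~ odd q -> (2 <= p)%N -> (6 <= q)%N ->
      graded_iso R (p + q) p (p + 4)) /\
   (odd p -> odd q -> (1 <= p)%N -> (3 <= q)%N ->
      graded_iso R (p + q) p (p + 2))).
Proof.
move=> hk hn; split.
- move=> _ _ hp hq; apply: graded_isoPE.
  pose A1 := fun i : 'I_(p + q) => (p.-1 <= i) && (i < p + 5).
  pose P' := fun i : 'I_(p + q) => (i < p) (+) A1 i.
  pose A2 := fun i : 'I_(p + q) => (nat_of_ord i == p.-1) || (nat_of_ord i == p + 4).
  have WA1 : Wt A1 = false.
    by rewrite /A1 Wt_int; have -> : minn (p + 5) (p + q) - minn p.-1 (p + q) = 6 by lia.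
  have WA2 : Wt A2 = false.
    rewrite Wt_odd.
    have -> : ((\sum_(i < p + q) A2 i) = (\sum_(i < p + q) (nat_of_ord i == p.-1))
                + (\sum_(i < p + q) (nat_of_ord i == p + 4)))%N.
      rewrite -big_split; apply: eq_bigr => i _; rewrite /A2.
      case: (boolP (nat_of_ord i == p.-1)) => h1; case: (boolP (nat_of_ord i == p + 4)) => h2 //=; lia.
    rewrite !sum_eq; have -> : (p.-1 < p + q) = true by lia.
    by have -> : (p + 4 < p + q) = true by lia.
  apply: (@graded_isoP_trans _ _ _ P').
  + apply: (@tr_iso R (p + q) _ P' A1 A1).
    * by rewrite ell_Wt.
    * by [].
    * left; split => //; split => //; split.
        rewrite /A1 E2_int.
        by have -> : minn (p + 5) (p + q) - minn p.-1 (p + q) = 6 by lia.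
      split; first by rewrite Bl_diag WA1 /A1 E2_int;
        have -> : minn (p + 5) (p + q) - minn p.-1 (p + q) = 6 by lia.
      rewrite Dp_Wt (@Wt_ext _ _ (fun i : 'I_(p + q) => (p <= i) && (i < p + 5))); last first.
        by move=> i; rewrite /P' /A1; lia.
      by rewrite Wt_int; have -> : minn (p + 5) (p + q) - minn p (p + q) = 5 by lia.
  + apply: (@tr_iso R (p + q) P' _ A2 A2).
    * by rewrite ell_Wt.
    * by move=> i; rewrite /P' /A1 /A2; lia.
    * left; split => //; split => //.
      have E2A2 : E2 A2 = true.
        rewrite (E2_nat _ (fun k => (k == p.-1) || (k == p + 4))).
        have -> : ((\sum_(i < p + q) ((nat_of_ord i == p.-1) || (nat_of_ord i == p + 4))) = 2)%N.
          have -> : ((\sum_(i < p + q) ((nat_of_ord i == p.-1) || (nat_of_ord i == p + 4)))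
                   = (\sum_(i < p + q) (nat_of_ord i == p.-1))
                     + (\sum_(i < p + q) (nat_of_ord i == p + 4)))%N.
            rewrite -big_split; apply: eq_bigr => i _.
            case: (boolP (nat_of_ord i == p.-1)) => h1;
              case: (boolP (nat_of_ord i == p + 4)) => h2 //=; lia.
          rewrite !sum_eq; have -> : (p.-1 < p + q) = true by lia.
          by have -> : (p + 4 < p + q) = true by lia.
        by [].
      split => //; split; first by rewrite Bl_diag E2A2 WA2.
      rewrite Dp_Wt (@Wt_ext _ _ (fun i : 'I_(p + q) => nat_of_ord i == p.-1)); last first.
        by move=> i; rewrite /A2; lia.
      rewrite Wt_odd sum_eq; have -> : (p.-1 < p + q) = true by lia.
      by [].
- move=> op oq hp hq; apply: graded_isoPE.
  apply: (@tr_iso R (p + q) _ _ (fun i : 'I_(p + q) => (p <= i) && (i < p + 2))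
            (fun _ => true)).
  + rewrite /ell (@eq_bigr _ _ _ _ _ _ _ (fun i : 'I_(p + q) => (p <= i) && (i < p + 2)));
      last by move=> i _; rewrite andbT.
    rewrite -/(Wt (fun i : 'I_(p + q) => (p <= i) && (i < p + 2))) Wt_int.
    by have -> : minn (p + 2) (p + q) - minn p (p + q) = 2 by lia.
  + by move=> i; lia.
  + right.
    have WA : Wt (fun _ : 'I_(p + q) => true) = false.
      rewrite (@Wt_ext _ _ (fun i : 'I_(p + q) => (0 <= i) && (i < p + q))); last first.
        by move=> i; rewrite ltn_ord.
      rewrite Wt_int; have -> : minn (p + q) (p + q) - minn 0 (p + q) = 4 * k by lia.
      by rewrite oddM.
    have EA : E2 (fun _ : 'I_(p + q) => true) = false.
      rewrite (E2_nat _ (fun _ => true)).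
      have -> : (\sum_(i < p + q) (fun _ : nat => true) i)%N = 4 * k.
        by rewrite sum_nat_const card_ord muln1.
      rewrite bin2.
      have -> : (4 * k * (4 * k).-1)./2 = (2 * k * (4 * k).-1) by
        rewrite -(doubleK (2 * k * (4 * k).-1)) -muln2; congr (_./2); lia.
      by rewrite oddM oddM.
    split => //; split => //; split => //; split; first by rewrite Bl_diag EA WA.
    rewrite Dp_Wt (@Wt_ext _ _ (fun i : 'I_(p + q) => (0 <= i) && (i < p + 2))); last first.
      by move=> i; rewrite andbT.
    rewrite Wt_int.
    have -> : minn (p + 2) (p + q) - minn 0 (p + q) = p + 2 by lia.
    by rewrite oddD op.
Qed.
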